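(* Let $f\in\mathbb{C}[h]$, $\lambda\in S_f$ and $\dot z\in\mathbb{C}$. (1) The formulas defining $A_{\mathcal{H}(f)}(\lambda,\dot z)$ and $B_{\mathcal{H}(f)}(\lambda,\dot z)$ give $\mathcal{H}(f)$-module structures on $\mathbb{C}[t,t^{-1}]$. (2) $A_{\mathcal{H}(f)}(\lambda,\dot z)$ (resp. $B_{\mathcal{H}(f)}(\lambda,\dot z)$) is a simple $\mathcal{H}(f)$-module if and only if $\lambda(i)+\dot z\neq 0$ for all $i\in\mathbb{Z}$ and $|\lambda|=0$. (3) Suppose $\lambda(i)+\dot z\neq 0$ for all $i\in\mathbb{Z}$ and $m=|\lambda|\neq 0$. Then every nonzero submodule of $A_{\mathcal{H}(f)}(\lambda,\dot z)$ (resp. $B_{\mathcal{H}(f)}(\lambda,\dot z)$) equals $\mathbb{C}[t,t^{-1}]g(t)$ for some nonzero $g(t)\in\mathbb{C}[t^m]$ which is an eigenvector of $h$. In particular, every maximal proper nonzero submodule of $A_{\mathcal{H}(f)}(\lambda,\dot z)$ equals $\mathbb{C}[t,t^{-1}](t^m-a)$ for some $a\in\mathbb{C}^*$.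
   Context: For $f(h)\in\mathbb{C}[h]$, $\mathcal{H}(f)$ is the unital associative $\mathbb{C}$-algebra generated by $x,y,h$ with relations $hx=xf(h)$, $yh=f(h)y$, $yx-xy=f(h)-h$. $S_f$ is the set of maps $\lambda:\mathbb{Z}\to\mathbb{C}$ with $f(\lambda(i))=\lambda(i+1)$ for all $i$; $|\lambda|$ is the nonnegative generator of the subgroup $\{m\in\mathbb{Z}\mid\lambda(i+m)=\lambda(i)\ \forall i\}$. For $\lambda\in S_f$, $\dot z\in\mathbb{C}$: $A_{\mathcal{H}(f)}(\lambda,\dot z)$ is the space $\mathbb{C}[t,t^{-1}]$ with $ht^i=\lambda(i)t^i$, $xt^i=t^{i+1}$, $yt^i=(\lambda(i)+\dot z)t^{i-1}$; $B_{\mathcal{H}(f)}(\lambda,\dot z)$ is the space $\mathbb{C}[t,t^{-1}]$ with $ht^i=\lambda(i)t^i$, $xt^i=(\lambda(i+1)+\dot z)t^{i+1}$, $yt^i=t^{i-1}$ ($i\in\mathbb{Z}$). *)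

(* Defs.v *)
(* C is modelled by algC (algebraically closed field of char 0). *)
From HB Require Import structures.
From mathcomp Require Import all_boot all_order all_algebra all_field.
Set Implicit Arguments. Unset Strict Implicit. Unset Printing Implicit Defensive.
Import Order.TTheory GRing.Theory Num.Theory.
Local Open Scope ring_scope.

(* Vectors: coefficient functions Z -> C; a Laurent polynomial sum_i v(i) t^i
   is such a function with finite support. *)
Definition vec := int -> algC.

Definition laurent (v : vec) : Prop :=
  exists N : nat, forall i : int, (N < absz i)%N -> v i = 0.

Definition vzero : vec := fun _ => 0.
Definition vadd (v w : vec) : vec := fun i => v i + w i.
Definition vscale (c : algC) (v : vec) : vec := fun i => c * v i.
Definition vsub (v w : vec) : vec := fun i => v i - w i.

Definition op_poly (p : {poly algC}) (T : vec -> vec) (v : vec) : vec :=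
  fun i => \sum_(k < size p) p`_k * iter k T v i.

Definition in_Sf (f : {poly algC}) (lam : int -> algC) : Prop :=
  forall i : int, f.[lam i] = lam (i + 1).

(* |lambda| = m : m is the nonnegative generator of the group of periods. *)
Definition is_abs_period (lam : int -> algC) (m : nat) : Prop :=
  forall k : int, (forall i : int, lam (i + k) = lam i) <-> (m%:Z %| k)%Z.

Definition is_Hf_module (f : {poly algC}) (X Y H : vec -> vec) : Prop :=
  laurent vzero /\
  (forall v w, laurent v -> laurent w -> laurent (vadd v w)) /\
  (forall c v, laurent v -> laurent (vscale c v)) /\
  (forall T, (T = X \/ T = Y \/ T = H) ->
     (forall v, laurent v -> laurent (T v)) /\
     (forall v w, laurent v -> laurent w -> T (vadd v w) = vadd (T v) (T w)) /\
     (forall c v, laurent v -> T (vscale c v) = vscale c (T v))) /\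
  (forall v, laurent v -> H (X v) = X (op_poly f H v)) /\
  (forall v, laurent v -> Y (H v) = op_poly f H (Y v)) /\
  (forall v, laurent v ->
     vsub (Y (X v)) (X (Y v)) = vsub (op_poly f H v) (H v)).

Definition Hop (lam : int -> algC) (v : vec) : vec := fun i => lam i * v i.
Definition A_x (v : vec) : vec := fun i => v (i - 1).
Definition A_y (lam : int -> algC) (z : algC) (v : vec) : vec :=
  fun i => (lam (i + 1) + z) * v (i + 1).
Definition B_x (lam : int -> algC) (z : algC) (v : vec) : vec :=
  fun i => (lam i + z) * v (i - 1).
Definition B_y (v : vec) : vec := fun i => v (i + 1).

Definition is_submodule (X Y H : vec -> vec) (S : vec -> Prop) : Prop :=
  (forall v, S v -> laurent v) /\ S vzero /\
  (forall v w, S v -> S w -> S (vadd v w)) /\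
  (forall c v, S v -> S (vscale c v)) /\
  (forall v, S v -> S (X v)) /\ (forall v, S v -> S (Y v)) /\
  (forall v, S v -> S (H v)).

Definition nonzero_sub (S : vec -> Prop) : Prop := exists v, S v /\ v <> vzero.
Definition proper_sub (S : vec -> Prop) : Prop := exists v, laurent v /\ ~ S v.

Definition is_simple (X Y H : vec -> vec) : Prop :=
  (exists v, laurent v /\ v <> vzero) /\
  forall S, is_submodule X Y H S ->
    (forall v, S v -> v = vzero) \/ (forall v, laurent v -> S v).

Definition is_max_sub (X Y H : vec -> vec) (S : vec -> Prop) : Prop :=
  is_submodule X Y H S /\ nonzero_sub S /\ proper_sub S /\
  forall S', is_submodule X Y H S' -> (forall v, S v -> S' v) -> proper_sub S' ->
    forall v, S' v <-> S v.

(* The Laurent polynomial t^(-n) P(t) for P in C[t]. *)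
Definition shiftp (n : nat) (P : {poly algC}) : vec :=
  fun i => if (0 <= i + n%:Z) then P`_(absz (i + n%:Z)) else 0.

(* The subspace C[t,t^-1] G of C[t,t^-1], for G in C[t]. *)
Definition laurent_mult_of (G : {poly algC}) (v : vec) : Prop :=
  exists (n : nat) (r : {poly algC}), v = shiftp n (r * G).

(* Main.v *)
Require Import Defs.
From HB Require Import structures.
From mathcomp Require Import all_boot all_order all_algebra all_field.
From mathcomp Require Import zify ring.
From Stdlib Require Import FunctionalExtensionality Classical.
Import Order.TTheory GRing.Theory Num.Theory.
Set Implicit Arguments. Unset Strict Implicit. Unset Printing Implicit Defensive.
Local Open Scope ring_scope.
Lemma vext (v w : vec) : (forall i, v i = w i) -> v = w.
Proof. exact: functional_extensionality. Qed.

Lemma laurent_vzero : laurent vzero. Proof. by exists 0%N. Qed.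

Lemma laurent_vadd v w : laurent v -> laurent w -> laurent (vadd v w).
Proof.
move=> [N hN] [M hM]; exists (maxn N M) => i hi.
rewrite /vadd hN ?hM ?addr0 //; lia.
Qed.

Lemma laurent_shape (T : vec -> vec) (d : int) (c : int -> algC) :
  (forall v i, T v i = c i * v (i + d)) -> forall v, laurent v -> laurent (T v).
Proof.
move=> hT v [N hN]; exists (N + absz d)%N => i hi.
rewrite hT hN ?mulr0 //; lia.
Qed.

Lemma shape_add (T : vec -> vec) (d : int) (c : int -> algC) :
  (forall v i, T v i = c i * v (i + d)) -> forall v w, T (vadd v w) = vadd (T v) (T w).
Proof. move=> hT v w; apply: vext => i; by rewrite /vadd !hT mulrDr. Qed.

Lemma shape_scale (T : vec -> vec) (d : int) (c : int -> algC) :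
  (forall v i, T v i = c i * v (i + d)) -> forall a v, T (vscale a v) = vscale a (T v).
Proof. move=> hT a v; apply: vext => i; by rewrite /vscale !hT mulrCA. Qed.

Lemma shape_Ax v i : A_x v i = 1 * v (i + (-1)). Proof. by rewrite mul1r. Qed.
Lemma shape_Ay lam z v i : A_y lam z v i = (lam (i + 1) + z) * v (i + 1). Proof. by []. Qed.
Lemma shape_Bx lam z v i : B_x lam z v i = (lam i + z) * v (i + (-1)). Proof. by []. Qed.
Lemma shape_By v i : B_y v i = 1 * v (i + 1). Proof. by rewrite mul1r. Qed.
Lemma shape_H lam v i : Hop lam v i = lam i * v (i + 0). Proof. by rewrite addr0. Qed.
Lemma shape_sc a v i : vscale a v i = a * v (i + 0). Proof. by rewrite addr0. Qed.

Lemma iterH lam k v i : iter k (Hop lam) v i = lam i ^+ k * v i.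
Proof. elim: k => [|k IH] /=; first by rewrite expr0 mul1r. by rewrite /Hop IH exprS mulrA. Qed.

Lemma op_polyH f lam v : op_poly f (Hop lam) v = fun i => f.[lam i] * v i.
Proof.
apply: vext => i; rewrite /op_poly horner_coef big_distrl /=.
by apply: eq_bigr => k _; rewrite iterH mulrA.
Qed.

Lemma partA f lam z : in_Sf f lam -> is_Hf_module f A_x (A_y lam z) (Hop lam).
Proof.
move=> hf; split; first exact: laurent_vzero.
split; first exact: laurent_vadd.
split; first by move=> c v; apply: (@laurent_shape (vscale c) 0 (fun _ => c) (shape_sc c)).
split.
  move=> T [->|[->|->]].
  - split; first exact: (@laurent_shape (A_x) (-1) (fun=> 1) shape_Ax).
    split; [move=> v w _ _; exact: (@shape_add (A_x) (-1) (fun=> 1) shape_Ax) | move=> c v _; exact: (@shape_scale (A_x) (-1) (fun=> 1) shape_Ax)].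
  - split; first exact: (@laurent_shape (A_y lam z) (1) (fun i => lam (i+1) + z) (shape_Ay lam z)).
    split; [move=> v w _ _; exact: (@shape_add (A_y lam z) (1) (fun i => lam (i+1) + z) (shape_Ay lam z)) | move=> c v _; exact: (@shape_scale (A_y lam z) (1) (fun i => lam (i+1) + z) (shape_Ay lam z))].
  - split; first exact: (@laurent_shape (Hop lam) (0) (lam) (shape_H lam)).
    split; [move=> v w _ _; exact: (@shape_add (Hop lam) (0) (lam) (shape_H lam)) | move=> c v _; exact: (@shape_scale (Hop lam) (0) (lam) (shape_H lam))].
split.
  move=> v _; rewrite op_polyH; apply: vext => i; rewrite /Hop /A_x.
  by rewrite hf subrK.
split.
  move=> v _; rewrite op_polyH; apply: vext => i; rewrite /Hop /A_y hf; ring.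
move=> v _; rewrite op_polyH; apply: vext => i; rewrite /vsub /Hop /A_y /A_x subrK addrK hf; ring.
Qed.

Lemma partB f lam z : in_Sf f lam -> is_Hf_module f (B_x lam z) B_y (Hop lam).
Proof.
move=> hf; split; first exact: laurent_vzero.
split; first exact: laurent_vadd.
split; first by move=> c v; apply: (@laurent_shape (vscale c) 0 (fun _ => c) (shape_sc c)).
split.
  move=> T [->|[->|->]].
  - split; first exact: (@laurent_shape (B_x lam z) (-1) (fun i => lam i + z) (shape_Bx lam z)).
    split; [move=> v w _ _; exact: (@shape_add (B_x lam z) (-1) (fun i => lam i + z) (shape_Bx lam z)) | move=> c v _; exact: (@shape_scale (B_x lam z) (-1) (fun i => lam i + z) (shape_Bx lam z))].
  - split; first exact: (@laurent_shape (B_y) (1) (fun=> 1) shape_By).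
    split; [move=> v w _ _; exact: (@shape_add (B_y) (1) (fun=> 1) shape_By) | move=> c v _; exact: (@shape_scale (B_y) (1) (fun=> 1) shape_By)].
  - split; first exact: (@laurent_shape (Hop lam) (0) (lam) (shape_H lam)).
    split; [move=> v w _ _; exact: (@shape_add (Hop lam) (0) (lam) (shape_H lam)) | move=> c v _; exact: (@shape_scale (Hop lam) (0) (lam) (shape_H lam))].
split.
  move=> v _; rewrite op_polyH; apply: vext => i; rewrite /Hop /B_x.
  rewrite hf subrK; ring.
split.
  move=> v _; rewrite op_polyH; apply: vext => i; rewrite /Hop /B_y hf; ring.
move=> v _; rewrite op_polyH; apply: vext => i; rewrite /vsub /Hop /B_y /B_x addrK subrK hf; ring.
Qed.

Definition sh (k : int) (v : vec) : vec := fun i => v (i - k).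
Definition delta (j : int) : vec := fun i => if i == j then 1 else 0.
Definition supp_in (v : vec) (a : int) (n : nat) : Prop :=
  forall i, v i != 0 -> (a <= i) && (i <= a + n%:Z).
Definition closedS (S : vec -> Prop) (lam : int -> algC) : Prop :=
  (forall v, S v -> laurent v) /\ S vzero /\ (forall v w, S v -> S w -> S (vadd v w)) /\
  (forall c v, S v -> S (vscale c v)) /\ (forall v, S v -> S (Hop lam v)).
Definition Shiftable (S : vec -> Prop) : Prop :=
  forall (k : int) v, S v -> exists w (c : int -> algC),
    S w /\ (forall l, c l != 0) /\ forall l, w (l + k) = c l * v l.

Lemma closed_of_sub X Y lam S : is_submodule X Y (Hop lam) S -> closedS S lam.
Proof. by move=> [h1 [h2 [h3 [h4 [_ [_ h7]]]]]]. Qed.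

Lemma nonzero_ex (v : vec) : v <> vzero -> exists i, v i != 0.
Proof.
move=> hv; apply: NNPP => h; apply: hv; apply: vext => i.
by apply/eqP; apply/negPn/negP => hi; apply: h; exists i.
Qed.

Lemma laurent_supp v : laurent v -> exists N : nat, supp_in v (- N%:Z) (N + N).
Proof.
move=> [N hN]; exists N => i hi.
have : ~ (N < absz i)%N by move=> h; move: hi; rewrite hN ?eqxx.
lia.
Qed.

Lemma laurent_delta j : laurent (delta j).
Proof. exists (absz j) => i hi; rewrite /delta; case: eqP => // e; subst; lia. Qed.

Lemma delta_neq0 j : delta j <> vzero.
Proof. move=> e; have := congr1 (fun f => f j) e; rewrite /delta /vzero eqxx => /eqP; by rewrite oner_eq0. Qed.

Lemma int_cases (k : int) : exists n : nat, k = n%:Z \/ k = - n%:Z.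
Proof. case: k => n; [by exists n; left | by exists n.+1; right; rewrite NegzE]. Qed.

Lemma shiftable_of S :
  (forall v, S v -> exists w (c : int -> algC), S w /\ (forall l, c l != 0) /\ forall l, w (l + 1) = c l * v l) ->
  (forall v, S v -> exists w (c : int -> algC), S w /\ (forall l, c l != 0) /\ forall l, w (l - 1) = c l * v l) ->
  Shiftable S.
Proof.
move=> hu hd k v Sv; have [n [->|->]] := int_cases k.
- elim: n => [|n [w [c [Sw [hc hw]]]]].
    exists v, (fun=> 1); split=> //; split=> [l|l]; [exact: oner_neq0 | by rewrite addr0 mul1r].
  have [w2 [c2 [Sw2 [hc2 hw2]]]] := hu w Sw.
  exists w2, (fun l => c2 (l + n%:Z) * c l); split=> //; split.
    by move=> l; rewrite mulf_neq0.
  move=> l; have -> : l + n.+1%:Z = (l + n%:Z) + 1 by lia.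
  by rewrite hw2 hw mulrA.
- elim: n => [|n [w [c [Sw [hc hw]]]]].
    exists v, (fun=> 1); split=> //; split=> [l|l]; [exact: oner_neq0 | by rewrite oppr0 addr0 mul1r].
  have [w2 [c2 [Sw2 [hc2 hw2]]]] := hd w Sw.
  exists w2, (fun l => c2 (l - n%:Z) * c l); split=> //; split.
    by move=> l; rewrite mulf_neq0.
  move=> l; have -> : l - n.+1%:Z = (l - n%:Z) - 1 by lia.
  by rewrite hw2 hw mulrA.
Qed.

Lemma reduce_simple S lam : closedS S lam -> Shiftable S ->
  (forall i j, i != j -> exists k, lam (i + k) != lam (j + k)) ->
  forall n a v, S v -> v <> vzero -> supp_in v a n ->
  exists w b, S w /\ w b != 0 /\ forall i, i != b -> w i = 0.
Proof.
move=> [_ [_ [Sadd [Ssc SH]]]] Ssh hsep; elim=> [|n IH] a v Sv vnz hs.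
  exists v, a; split=> //; have [i hi] := nonzero_ex vnz.
  have := hs i hi => /andP[h1 h2]; have ia : i = a by lia.
  split; first by rewrite -ia.
  move=> j ja; apply/eqP; apply/negPn/negP => hj; have := hs j hj; lia.
case: (eqVneq (v a) 0) => va.
  apply: (IH (a + 1) v Sv vnz) => i hi; have := hs i hi.
  have : i != a by apply: contraNneq hi => ->; rewrite va.
  lia.
case: (classic (forall i, i != a -> v i = 0)) => hall; first by exists v, a.
have [j hj] := not_all_ex_not _ _ hall.
have [ja vj] := imply_to_and _ _ hj.
have vj' : v j != 0 by apply/eqP.
have aj : a != j by rewrite eq_sym.
have [k hk] := hsep a j aj.
have [w [c [Sw [hc hw]]]] := Ssh k v Sv.
pose w' := vadd (Hop lam w) (vscale (- lam (a + k)) w).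
have hw' : forall l, w' (l + k) = (lam (l + k) - lam (a + k)) * (c l * v l).
  by move=> l; rewrite /w' /vadd /Hop /vscale hw; ring.
apply: (IH (a + k + 1) w').
- by apply: Sadd; [exact: SH | exact: Ssc].
- move=> e; have := hw' j; rewrite e /vzero => /esym/eqP.
  by rewrite !mulf_eq0 subr_eq0 (eq_sym (lam (j + k))) (negbTE hk) (negbTE (hc j)) (negbTE vj').
- move=> i hi; have := hw' (i - k); rewrite subrK => e; rewrite e in hi.
  move: hi; rewrite !mulf_eq0 !negb_or => /andP[h1 /andP[h2 h3]].
  have ika : i - k != a by apply: contraNneq h1 => e'; rewrite -e' subrK subrr.
  have := hs (i - k) h3; lia.
Qed.

Lemma all_delta S lam : closedS S lam -> Shiftable S ->
  forall w b, S w -> w b != 0 -> (forall i, i != b -> w i = 0) -> forall j, S (delta j).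
Proof.
move=> [_ [_ [Sadd [Ssc _]]]] Ssh w b Sw wb hw j.
have [w2 [c [Sw2 [hc hw2]]]] := Ssh (j - b) w Sw.
have -> : delta j = vscale (c b * w b)^-1 w2; last by apply: Ssc.
apply: vext => i; rewrite /delta /vscale.
have := hw2 (i - (j - b)); rewrite subrK => ->.
case: (eqVneq i j) => [->|ij].
  rewrite (_ : j - (j - b) = b); last by ring.
  by rewrite mulVf // mulf_neq0.
rewrite (hw (i - (j - b))) ?mulr0 //.
lia.
Qed.

Lemma all_laurent S lam : closedS S lam -> (forall j, S (delta j)) -> forall v, laurent v -> S v.
Proof.
move=> [_ [S0 [Sadd [Ssc _]]]] Sd v [N hN].
have key : forall n : nat, S (fun i => if (- N%:Z <= i) && (i < - N%:Z + n%:Z) then v i else 0).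
  elim=> [|n IH].
    have -> : (fun i : int => if (- N%:Z <= i) && (i < - N%:Z + 0%:Z) then v i else 0) = vzero; last by [].
    apply: vext => i; rewrite /vzero; case: ifP => // h; exfalso; lia.
  have -> : (fun i : int => if (- N%:Z <= i) && (i < - N%:Z + n.+1%:Z) then v i else 0) =
     vadd (fun i => if (- N%:Z <= i) && (i < - N%:Z + n%:Z) then v i else 0)
          (vscale (v (- N%:Z + n%:Z)) (delta (- N%:Z + n%:Z))).
    apply: vext => i; rewrite /vadd /vscale /delta.
    case: (eqVneq i (- N%:Z + n%:Z)) => [->|ne].
      rewrite mulr1; case: ifP => h1; case: ifP => h2; try (exfalso; lia); by rewrite ?add0r.
    rewrite mulr0 addr0; case: ifP => h1; case: ifP => h2 //; exfalso; lia.
  by apply: Sadd => //; apply: Ssc.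
have -> : v = (fun i => if (- N%:Z <= i) && (i < - N%:Z + (N + N).+1%:Z) then v i else 0); last exact: key.
apply: vext => i; case: ifP => // h; apply: hN; lia.
Qed.

Lemma sep_of_abs0 lam : is_abs_period lam 0 -> forall i j, i != j -> exists k, lam (i + k) != lam (j + k).
Proof.
move=> hp i j ij; apply: NNPP => hn.
have per : forall l, lam (l + (j - i)) = lam l.
  move=> l; apply/eqP; apply: NNPP => hne; apply: hn; exists (l - i).
  have e1 : i + (l - i) = l by ring.
  have e2 : j + (l - i) = l + (j - i) by ring.
  by rewrite e1 e2 eq_sym; apply/negP.
have := (hp (j - i)).1 per; rewrite dvd0z subr_eq0 => /eqP e.
by rewrite e eqxx in ij.
Qed.

Lemma abs0_of_noper lam : (forall k, k != 0 -> ~ (forall i, lam (i + k) = lam i)) -> is_abs_period lam 0.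
Proof.
move=> h k; split.
  move=> hk; rewrite dvd0z; apply/eqP; apply: NNPP => nz; apply: (h k) => //; exact/eqP.
by rewrite dvd0z => /eqP -> i; rewrite addr0.
Qed.

Lemma simple_gen X Y lam : (forall S, is_submodule X Y (Hop lam) S -> Shiftable S) ->
  is_abs_period lam 0 -> is_simple X Y (Hop lam).
Proof.
move=> hsh hp; split.
  by exists (delta 0); split; [exact: laurent_delta | exact: delta_neq0].
move=> S hS; have cS := closed_of_sub hS; have Ssh := hsh S hS.
case: (classic (exists v, S v /\ v <> vzero)) => [[v [Sv vnz]]|hn]; last first.
  left => v Sv; apply: NNPP => vnz; apply: hn; by exists v.
right; have [N hs] := laurent_supp (cS.1 v Sv).
have [w [b [Sw [wb hw]]]] := reduce_simple cS Ssh (sep_of_abs0 hp) Sv vnz hs.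
exact: (all_laurent cS (all_delta cS Ssh Sw wb hw)).
Qed.

Lemma not_simple X Y lam S : is_submodule X Y (Hop lam) S ->
  (exists v, S v /\ v <> vzero) -> (exists v, laurent v /\ ~ S v) -> ~ is_simple X Y (Hop lam).
Proof.
move=> hS [v1 [Sv1 nz]] [v2 [l2 nS]] [_ /(_ S hS) [h|h]].
- by apply: nz; apply: h.
- by apply: nS; apply: h.
Qed.

Definition S2 (k : int) (v : vec) : Prop := exists u, laurent u /\ forall i, v i = u i - u (i - k).

Lemma S2_shape (T : vec -> vec) (d : int) (c : int -> algC) k :
  (forall v i, T v i = c i * v (i + d)) -> (forall i, c (i - k) = c i) ->
  forall v, S2 k v -> S2 k (T v).
Proof.
move=> hT hc v [u [lu hu]]; exists (T u); split; first exact: (laurent_shape hT).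
move=> i; rewrite !hT hu hc (_ : i - k + d = i + d - k) //; [ring|ring].
Qed.

Lemma S2_closed lam k : (forall i, lam (i + k) = lam i) -> closedS (S2 k) lam.
Proof.
move=> per; split.
  move=> v [u [[N hN] hu]]; exists (N + absz k)%N => i hi; rewrite hu !hN ?subr0 //; lia.
split; first by exists vzero; split; [exact: laurent_vzero | move=> i; rewrite /vzero subr0].
split.
  move=> v w [u1 [l1 h1]] [u2 [l2 h2]]; exists (vadd u1 u2); split; first exact: laurent_vadd.
  by move=> i; rewrite /vadd h1 h2; ring.
split.
  move=> c v [u [l1 h1]]; exists (vscale c u); split.
    exact: (@laurent_shape (vscale c) 0 (fun _ => c) (shape_sc c)).
  by move=> i; rewrite /vscale h1; ring.
apply: (S2_shape (shape_H lam)) => i; by rewrite -{2}(subrK k i) per.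
Qed.

Lemma per_m (lam : int -> algC) (k : int) : (forall i, lam (i + k) = lam i) -> forall i, lam (i - k) = lam i.
Proof. by move=> per i; rewrite -{2}(subrK k i) per. Qed.

Lemma S2_subA lam z k : (forall i, lam (i + k) = lam i) -> is_submodule A_x (A_y lam z) (Hop lam) (S2 k).
Proof.
move=> per; have [h1 [h2 [h3 [h4 h5]]]] := S2_closed per.
do 4 (split => //); split.
  by apply: (@S2_shape A_x (-1) (fun=> 1)) => //; exact: shape_Ax.
split => //.
apply: (@S2_shape (A_y lam z) 1 (fun i => lam (i + 1) + z)) => // i.
by rewrite (_ : i - k + 1 = i + 1 - k) ?per_m //; ring.
Qed.

Lemma S2_subB lam z k : (forall i, lam (i + k) = lam i) -> is_submodule (B_x lam z) B_y (Hop lam) (S2 k).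
Proof.
move=> per; have [h1 [h2 [h3 [h4 h5]]]] := S2_closed per.
do 4 (split => //); split.
  apply: (@S2_shape (B_x lam z) (-1) (fun i => lam i + z)) => // i.
  by rewrite per_m.
split => //.
by apply: (@S2_shape B_y 1 (fun=> 1)) => //; exact: shape_By.
Qed.

Lemma S2_nonzero k : k != 0 -> exists v, S2 k v /\ v <> vzero.
Proof.
move=> knz; exists (fun i => delta 0 i - delta 0 (i - k)); split.
  by exists (delta 0); split; [exact: laurent_delta|].
move=> e; have := congr1 (fun f => f 0) e; rewrite /delta /vzero /= ?eqxx ?sub0r.
rewrite (_ : (- k == 0) = false); last by apply/negbTE; rewrite oppr_eq0.
by rewrite subr0 => /eqP; rewrite oner_eq0.
Qed.

Lemma not_in_S2 k : k != 0 -> ~ S2 k (delta 0).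
Proof.
move=> knz [u [[N hN] hu]].
have h1 : forall n : nat, u (n%:Z * k) = u 0.
  elim=> [|n IH]; first by rewrite mul0r.
  have := hu (n.+1%:Z * k); rewrite /delta.
  rewrite (_ : (n.+1%:Z * k == 0) = false); last by apply/negbTE; rewrite mulf_neq0.
  rewrite (_ : n.+1%:Z * k - k = n%:Z * k); last by rewrite -addn1 PoszD mulrDl mul1r addrK.
  by rewrite IH => /eqP; rewrite eq_sym subr_eq0 => /eqP.
have h2 : forall n : nat, u (- (n.+1%:Z * k)) = u (- k).
  elim=> [|n IH]; first by rewrite mul1r.
  have := hu (- (n.+1%:Z * k)); rewrite /delta.
  rewrite (_ : (- (n.+1%:Z * k) == 0) = false); last by apply/negbTE; rewrite oppr_eq0 mulf_neq0.
  rewrite (_ : - (n.+1%:Z * k) - k = - (n.+2%:Z * k)); last by lia.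
  by rewrite IH => /eqP; rewrite eq_sym subr_eq0 => /eqP.
have := hu 0; rewrite /delta eqxx sub0r -(h1 N.+1) -(h2 N).
rewrite !hN ?subr0 ?oner_eq0 //; [by move=> /eqP; rewrite oner_eq0| |]; nia.
Qed.

Definition S1A (i0 : int) (v : vec) : Prop := laurent v /\ forall l, l < i0 -> v l = 0.
Definition S1B (i0 : int) (v : vec) : Prop := laurent v /\ forall l, i0 <= l -> v l = 0.

Lemma S1A_sub lam z i0 : lam i0 + z = 0 -> is_submodule A_x (A_y lam z) (Hop lam) (S1A i0).
Proof.
move=> e; split; first by move=> v [].
split; first by split; [exact: laurent_vzero|].
split.
  move=> v w [l1 h1] [l2 h2]; split; first exact: laurent_vadd.
  by move=> l hl; rewrite /vadd h1 ?h2 ?addr0.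
split.
  move=> c v [l1 h1]; split; first exact: (@laurent_shape (vscale c) 0 (fun _ => c) (shape_sc c)).
  by move=> l hl; rewrite /vscale h1 ?mulr0.
split.
  move=> v [l1 h1]; split; first exact: (@laurent_shape A_x (-1) (fun=> 1) shape_Ax).
  move=> l hl; rewrite /A_x h1 //; lia.
split.
  move=> v [l1 h1]; split; first exact: (@laurent_shape (A_y lam z) 1 (fun i => lam (i+1) + z) (shape_Ay lam z)).
  move=> l hl; rewrite /A_y; case: (eqVneq (l + 1) i0) => [->|ne]; first by rewrite e mul0r.
  rewrite h1 ?mulr0 //; lia.
move=> v [l1 h1]; split; first exact: (@laurent_shape (Hop lam) 0 lam (shape_H lam)).
by move=> l hl; rewrite /Hop h1 ?mulr0.
Qed.

Lemma S1B_sub lam z i0 : lam i0 + z = 0 -> is_submodule (B_x lam z) B_y (Hop lam) (S1B i0).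
Proof.
move=> e; split; first by move=> v [].
split; first by split; [exact: laurent_vzero|].
split.
  move=> v w [l1 h1] [l2 h2]; split; first exact: laurent_vadd.
  by move=> l hl; rewrite /vadd h1 ?h2 ?addr0.
split.
  move=> c v [l1 h1]; split; first exact: (@laurent_shape (vscale c) 0 (fun _ => c) (shape_sc c)).
  by move=> l hl; rewrite /vscale h1 ?mulr0.
split.
  move=> v [l1 h1]; split; first exact: (@laurent_shape (B_x lam z) (-1) (fun i => lam i + z) (shape_Bx lam z)).
  move=> l hl; rewrite /B_x; case: (eqVneq l i0) => [->|ne]; first by rewrite e mul0r.
  rewrite h1 ?mulr0 //; lia.
split.
  move=> v [l1 h1]; split; first exact: (@laurent_shape B_y 1 (fun=> 1) shape_By).
  move=> l hl; rewrite /B_y h1 //; lia.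
move=> v [l1 h1]; split; first exact: (@laurent_shape (Hop lam) 0 lam (shape_H lam)).
by move=> l hl; rewrite /Hop h1 ?mulr0.
Qed.

Lemma delta_at j : delta j j = 1. Proof. by rewrite /delta eqxx. Qed.

Lemma shiftA lam z : (forall i, lam i + z != 0) ->
  forall S, is_submodule A_x (A_y lam z) (Hop lam) S -> Shiftable S.
Proof.
move=> hz S [_ [_ [_ [_ [SX [SY _]]]]]]; apply: shiftable_of => v Sv.
  exists (A_x v), (fun=> 1); split; first exact: SX.
  by split=> [l|l]; [exact: oner_neq0 | rewrite /A_x addrK mul1r].
exists (A_y lam z v), (fun l => lam l + z); split; first exact: SY.
by split=> // l; rewrite /A_y subrK.
Qed.

Lemma shiftB lam z : (forall i, lam i + z != 0) ->
  forall S, is_submodule (B_x lam z) B_y (Hop lam) S -> Shiftable S.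
Proof.
move=> hz S [_ [_ [_ [_ [SX [SY _]]]]]]; apply: shiftable_of => v Sv.
  exists (B_x lam z v), (fun l => lam (l + 1) + z); split; first exact: SX.
  by split=> // l; rewrite /B_x addrK.
exists (B_y v), (fun=> 1); split; first exact: SY.
by split=> [l|l]; [exact: oner_neq0 | rewrite /B_y subrK mul1r].
Qed.

Lemma simpleA lam z : is_simple A_x (A_y lam z) (Hop lam) <->
     (forall i, lam i + z != 0) /\ is_abs_period lam 0.
Proof.
split; last by move=> [hz hp]; apply: simple_gen => //; exact: shiftA.
move=> hs; split.
  move=> i; apply/negP => /eqP e; apply: (not_simple (S1A_sub e)) => //.
    exists (delta i); split; last exact: delta_neq0.
    by split; [exact: laurent_delta | move=> l hl; rewrite /delta ifF //; apply/negbTE; lia].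
  exists (delta (i - 1)); split; first exact: laurent_delta.
  move=> [_ h]; have : (1:algC) = 0 by rewrite -(delta_at (i-1)); apply: h; lia.
  by move/eqP; rewrite oner_eq0.
apply: abs0_of_noper => k knz per; apply: (not_simple (S2_subA z per)) => //.
  exact: S2_nonzero.
by exists (delta 0); split; [exact: laurent_delta | exact: not_in_S2].
Qed.

Lemma simpleB lam z : is_simple (B_x lam z) B_y (Hop lam) <->
     (forall i, lam i + z != 0) /\ is_abs_period lam 0.
Proof.
split; last by move=> [hz hp]; apply: simple_gen => //; exact: shiftB.
move=> hs; split.
  move=> i; apply/negP => /eqP e; apply: (not_simple (S1B_sub e)) => //.
    exists (delta (i - 1)); split; last exact: delta_neq0.
    by split; [exact: laurent_delta | move=> l hl; rewrite /delta ifF //; apply/negbTE; lia].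
  exists (delta i); split; first exact: laurent_delta.
  move=> [_ h]; have : (1:algC) = 0 by rewrite -(delta_at i); apply: h; lia.
  by move/eqP; rewrite oner_eq0.
apply: abs0_of_noper => k knz per; apply: (not_simple (S2_subB z per)) => //.
  exact: S2_nonzero.
by exists (delta 0); split; [exact: laurent_delta | exact: not_in_S2].
Qed.

Lemma dvdzP' (m x : int) : (m %| x)%Z <-> exists q : int, x = q * m.
Proof. split; [by move/dvdzP | by move=> h; apply/dvdzP]. Qed.

Lemma dvdz_add' (m x y : int) : (m %| x)%Z -> (m %| y)%Z -> (m %| x + y)%Z.
Proof. move=> /dvdzP' [a ->] /dvdzP' [b ->]; apply/dvdzP'; exists (a + b); ring. Qed.
Lemma dvdz_opp' (m x : int) : (m %| x)%Z -> (m %| - x)%Z.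
Proof. move=> /dvdzP' [a ->]; apply/dvdzP'; exists (- a); ring. Qed.
Lemma dvdz_mulm (m q : int) : (m %| q * m)%Z.
Proof. by apply/dvdzP'; exists q. Qed.
Lemma dvdz_eq' (m x y : int) : x = y -> (m %| x)%Z -> (m %| y)%Z.
Proof. by move=> ->. Qed.

Definition sc (m : nat) (v : vec) : Prop :=
  forall i j, v i != 0 -> v j != 0 -> (m%:Z %| i - j)%Z.
Definition class0 (m : nat) (v : vec) : Prop :=
  forall i, v i != 0 -> (m%:Z %| i)%Z.

Lemma per_mul lam m : is_abs_period lam m -> forall (M : int) l, lam (l + M * m%:Z) = lam l.
Proof. by move=> hp M l; apply: (hp _).2; exact: dvdz_mulm. Qed.

Lemma lam_same lam m : is_abs_period lam m -> forall i j, (m%:Z %| i - j)%Z -> lam i = lam j.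
Proof. by move=> hp i j h; rewrite -(subrK j i) addrC (hp _).2. Qed.

Lemma lam_dist f lam m : in_Sf f lam -> is_abs_period lam m -> (0 < m)%N ->
  forall i j, lam i = lam j -> (m%:Z %| i - j)%Z.
Proof.
move=> hf hp hm i j e.
have fw : forall n : nat, lam (j + n%:Z) = lam (i + n%:Z).
  elim=> [|n IH]; first by rewrite !addr0.
  have -> : j + n.+1%:Z = (j + n%:Z) + 1 by lia.
  have -> : i + n.+1%:Z = (i + n%:Z) + 1 by lia.
  by rewrite -!hf IH.
apply: (hp _).1 => l.
pose M : int := absz (l - j).
have hM : 0 <= l - j + M * m%:Z by rewrite /M; nia.
pose n := absz (l - j + M * m%:Z).
have hn : n%:Z = l - j + M * m%:Z by rewrite /n gez0_abs.
rewrite -(per_mul hp M l) -(per_mul hp M (l + (i - j))).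
have -> : l + M * m%:Z = j + n%:Z by rewrite hn; ring.
have -> : l + (i - j) + M * m%:Z = i + n%:Z by rewrite hn; ring.
by rewrite fw.
Qed.

Lemma supp_weak v a n a' n' : supp_in v a' n' -> a <= a' -> a' + n'%:Z <= a + n%:Z -> supp_in v a n.
Proof. move=> hs h1 h2 i hi; have := hs i hi; lia. Qed.

Lemma reduce3 f lam m S : in_Sf f lam -> is_abs_period lam m -> (0 < m)%N -> closedS S lam ->
  forall n a v, S v -> v <> vzero -> supp_in v a n ->
  exists w, S w /\ w <> vzero /\ sc m w /\ supp_in w a n.
Proof.
move=> hf hp hm [_ [_ [Sadd [Ssc SH]]]]; elim=> [|n IH] a v Sv vnz hs.
  exists v; do 3 split => //; move=> i j hi hj.
  have := hs i hi; have := hs j hj => h1 h2.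
  by rewrite (_ : i - j = 0) ?dvdz0 //; lia.
case: (eqVneq (v a) 0) => va.
  have [w [Sw [wnz [scw hw]]]] : exists w, S w /\ w <> vzero /\ sc m w /\ supp_in w (a + 1) n.
    apply: (IH (a + 1) v Sv vnz) => i hi; have := hs i hi.
    have : i != a by apply: contraNneq hi => ->; rewrite va.
    lia.
  exists w; do 3 split => //; apply: (supp_weak hw); lia.
case: (classic (sc m v)) => hsc; first by exists v.
have [i hi] := not_all_ex_not _ _ hsc.
have [j hj] := not_all_ex_not _ _ hi.
have [vi hj2] := imply_to_and _ _ hj.
have [vj hij] := imply_to_and _ _ hj2.
have lij : lam i != lam j by apply/eqP => e; apply: hij; exact: (lam_dist hf hp hm e).
have [x [vx lx]] : exists x, v x != 0 /\ lam x != lam a.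
  case: (eqVneq (lam i) (lam a)) => e; last by exists i.
  by exists j; split => //; rewrite -e eq_sym.
pose w' := vadd (Hop lam v) (vscale (- lam a) v).
have hw' : forall l, w' l = (lam l - lam a) * v l by move=> l; rewrite /w' /vadd /Hop /vscale; ring.
have [w [Sw [wnz [scw hw]]]] : exists w, S w /\ w <> vzero /\ sc m w /\ supp_in w (a + 1) n.
  apply: (IH (a + 1) w').
  - by apply: Sadd; [exact: SH | exact: Ssc].
  - move=> e; have := hw' x; rewrite e /vzero => /esym/eqP.
    by rewrite mulf_eq0 subr_eq0 (negbTE lx) (negbTE vx).
  - move=> l hl; rewrite hw' in hl; move: hl; rewrite mulf_eq0 negb_or subr_eq0 => /andP[h1 h2].
    have la : l != a by apply: contraNneq h1 => ->.
    have := hs l h2; lia.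
exists w; do 3 split => //; apply: (supp_weak hw); lia.
Qed.

Definition ShOK (m : nat) (S : vec -> Prop) : Prop :=
  forall w, S w -> sc m w -> S (sh 1 w) /\ S (sh (-1) w).

Lemma sc_sh m k w : sc m w -> sc m (sh k w).
Proof.
move=> h i j hi hj; have := h _ _ hi hj.
by rewrite (_ : i - k - (j - k) = i - j) //; ring.
Qed.

Lemma sh_sh a b w : sh a (sh b w) = sh (a + b) w.
Proof. apply: vext => i; rewrite /sh; congr w; ring. Qed.

Lemma shS m S : ShOK m S -> forall w, S w -> sc m w -> forall k, S (sh k w).
Proof.
move=> hS w Sw scw k; have [n [->|->]] := int_cases k.
  elim: n => [|n IH]; first by rewrite (_ : sh 0 w = w) //; apply: vext => i; rewrite /sh subr0.
  rewrite (_ : n.+1%:Z = 1 + n%:Z); last by lia.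
  by rewrite -sh_sh; apply: (hS _ IH (sc_sh (k:=n%:Z) scw)).1.
elim: n => [|n IH]; first by rewrite (_ : sh (-0) w = w) //; apply: vext => i; rewrite /sh subr0.
rewrite (_ : - n.+1%:Z = -1 + - n%:Z); last by lia.
by rewrite -sh_sh; apply: (hS _ IH (sc_sh (k:=- n%:Z) scw)).2.
Qed.

Lemma min_good (P : nat -> Prop) : (exists D, P D) -> exists D, P D /\ forall D', P D' -> (D <= D')%N.
Proof.
move=> [D hD].
have : forall n D, (D <= n)%N -> P D -> exists D0, P D0 /\ forall D', P D' -> (D0 <= D')%N.
  elim=> [|n IH] D1 hD1 PD1.
    by exists D1; split => // D' _; rewrite (_ : D1 = 0%N) //; lia.
  case: (classic (exists D', (D' < D1)%N /\ P D')) => [[D' [h1 h2]]|hn].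
    by apply: (IH D') => //; lia.
  exists D1; split => // D' PD'; case: (ltnP D' D1) => // h; exfalso; apply: hn; by exists D'.
by move=> /(_ D D (leqnn D) hD).
Qed.

Lemma shOK_A lam z m S : is_abs_period lam m -> (forall i, lam i + z != 0) ->
  is_submodule A_x (A_y lam z) (Hop lam) S -> ShOK m S.
Proof.
move=> hp hz [_ [S0 [_ [Ssc [SX [SY _]]]]]] w Sw scw; split; first exact: SX.
case: (classic (w = vzero)) => [->|wnz].
  by rewrite (_ : sh (-1) vzero = vzero).
have [b wb] := nonzero_ex wnz.
have -> : sh (-1) w = vscale (lam b + z)^-1 (A_y lam z w); last by apply: Ssc; exact: SY.
apply: vext => i; rewrite /sh /vscale /A_y opprK.
case: (eqVneq (w (i + 1)) 0) => [->|wi]; first by rewrite !mulr0.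
rewrite (lam_same hp (scw _ _ wi wb)) mulrA mulVf ?mul1r //.
Qed.

Lemma shOK_B lam z m S : is_abs_period lam m -> (forall i, lam i + z != 0) ->
  is_submodule (B_x lam z) B_y (Hop lam) S -> ShOK m S.
Proof.
move=> hp hz [_ [S0 [_ [Ssc [SX [SY _]]]]]] w Sw scw; split; last first.
  by rewrite (_ : sh (-1) w = B_y w); [exact: SY | apply: vext => i; rewrite /sh /B_y opprK].
case: (classic (w = vzero)) => [->|wnz].
  by rewrite (_ : sh 1 vzero = vzero).
have [b wb] := nonzero_ex wnz.
have -> : sh 1 w = vscale (lam (b + 1) + z)^-1 (B_x lam z w); last by apply: Ssc; exact: SX.
apply: vext => i; rewrite /sh /vscale /B_x.
case: (eqVneq (w (i - 1)) 0) => [->|wi]; first by rewrite !mulr0.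
have : (m%:Z %| i - (b + 1))%Z by apply: dvdz_eq' (scw _ _ wi wb); ring.
move=> /(lam_same hp) ->; rewrite mulrA mulVf ?mul1r //.
Qed.

Lemma shiftp_add n (P Q : {poly algC}) : shiftp n (P + Q) = vadd (shiftp n P) (shiftp n Q).
Proof. apply: vext => i; rewrite /shiftp /vadd; case: ifP => _; by rewrite ?coefD ?addr0. Qed.

Lemma shiftp_scale n c (P : {poly algC}) : shiftp n (c%:P * P) = vscale c (shiftp n P).
Proof. apply: vext => i; rewrite /shiftp /vscale; case: ifP => _; by rewrite ?coefCM ?mulr0. Qed.

Lemma shiftp0 n : shiftp n 0 = vzero.
Proof. apply: vext => i; rewrite /shiftp /vzero; case: ifP => _; by rewrite ?coef0. Qed.

Lemma shiftp_X n (P : {poly algC}) : shiftp n ('X * P) = sh 1 (shiftp n P).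
Proof.
apply: vext => i; rewrite /shiftp /sh coefXM.
repeat case: ifPn => ?; try (exfalso; lia); try done; congr (P`_ _); lia.
Qed.

Lemma shiftp_sh n (P : {poly algC}) : shiftp n P = sh (- n%:Z) (shiftp 0 P).
Proof. apply: vext => i; rewrite /shiftp /sh opprK addr0. by []. Qed.

Lemma shiftp_Xn n k (P : {poly algC}) : shiftp (n + k) ('X^k * P) = shiftp n P.
Proof.
apply: vext => i; rewrite /shiftp coefXnM.
repeat case: ifPn => ?; try (exfalso; lia); try done; congr (P`_ _); lia.
Qed.

Lemma shiftp_succ n (P : {poly algC}) : sh (-1) (shiftp n P) = shiftp n.+1 P.
Proof.
apply: vext => i; rewrite /shiftp /sh.
by rewrite (_ : i - -1 + n%:Z = i + n.+1%:Z) //; lia.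
Qed.

Lemma laurent_shiftp n (P : {poly algC}) : laurent (shiftp n P).
Proof.
exists (n + size P)%N => i hi; rewrite /shiftp; case: ifP => h //.
have hs : (size P <= absz (i + n%:Z)%R)%N by lia.
by rewrite nth_default.
Qed.

Lemma sh_vadd k v w : sh k (vadd v w) = vadd (sh k v) (sh k w). Proof. by []. Qed.
Lemma sh_vscale k c v : sh k (vscale c v) = vscale c (sh k v). Proof. by []. Qed.
Lemma sh_vzero k : sh k vzero = vzero. Proof. by []. Qed.
Lemma sh0 v : sh 0 v = v. Proof. by apply: vext => i; rewrite /sh subr0. Qed.

Lemma vsub_add v w : vsub v w = vadd v (vscale (-1) w).
Proof. by apply: vext => i; rewrite /vsub /vadd /vscale mulN1r. Qed.

Definition Good (S : vec -> Prop) (m D : nat) : Prop :=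
  exists g, S g /\ g <> vzero /\ class0 m g /\ supp_in g 0 D.

Lemma class0_sc m g : class0 m g -> sc m g.
Proof. by move=> h i j hi hj; apply: dvdz_add' (h _ hi) (dvdz_opp' (h _ hj)). Qed.

Lemma dvd_small (m : nat) (i : int) : (0 < m)%N -> (m%:Z %| i)%Z -> - m%:Z < i -> 0 <= i.
Proof.
move=> hm /dvdzP' [q ->] h.
case: (lerP 0 q) => hq; first by rewrite mulr_ge0.
exfalso; have : (q + 1) * m%:Z <= 0 by rewrite mulr_le0_ge0 //; lia.
rewrite mulrDl mul1r; lia.
Qed.

Lemma exist_good f lam m S : in_Sf f lam -> is_abs_period lam m -> (0 < m)%N -> closedS S lam ->
  ShOK m S -> nonzero_sub S -> exists D, Good S m D.
Proof.
move=> hf hp hm cS hS [v [Sv vnz]].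
have [N hs] := laurent_supp (cS.1 v Sv).
have [w [Sw [wnz [scw hw]]]] := reduce3 hf hp hm cS Sv vnz hs.
have [b wb] := nonzero_ex wnz.
pose k : int := (N + N)%:Z * m%:Z - b.
exists ((N + N) * m + N + N)%N, (sh k w); split; first exact: (shS hS Sw scw).
split.
  move=> e; have := congr1 (fun g => g (b + k)) e; rewrite /sh /vzero addrK => /eqP.
  by rewrite (negbTE wb).
split.
  move=> i hi; have := scw _ _ hi wb => h.
  have -> : i = (i - k - b) + (N + N)%:Z * m%:Z by rewrite /k; ring.
  exact: dvdz_add' h (dvdz_mulm _ _).
move=> i hi; have h1 := hw _ hi; have h2 := hw _ wb.
have hP : (N + N)%:Z <= (N + N)%:Z * m%:Z by rewrite -PoszM lez_nat leq_pmulr.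
move: h1 h2 hP; rewrite /k (_ : Posz ((N + N) * m + N + N)%N = (N + N)%:Z * m%:Z + N%:Z + N%:Z); last by lia.
generalize ((N + N)%:Z * m%:Z) => P; lia.
Qed.

Lemma part3_gen f lam m S : in_Sf f lam -> is_abs_period lam m -> (0 < m)%N -> closedS S lam ->
  ShOK m S -> nonzero_sub S ->
  exists q : {poly algC}, q != 0 /\
     (exists c : algC, Hop lam (shiftp 0 (q \Po 'X^m)) = vscale c (shiftp 0 (q \Po 'X^m))) /\
     (forall v, S v <-> laurent_mult_of (q \Po 'X^m) v).
Proof.
move=> hf hp hm cS hS hnz.
have [D0 [[g [Sg [gnz [c0g sg]]]] hmin]] := min_good (exist_good hf hp hm cS hS hnz).
have [Slau [S0 [Sadd [Ssc SH]]]] := cS.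
have hmin' : forall w D', S w -> class0 m w -> (D' < D0)%N -> supp_in w 0 D' -> w = vzero.
  move=> w D' Sw cw hD hw; apply: NNPP => wnz.
  have : (D0 <= D')%N by apply: hmin; exists w.
  lia.
pose q := \poly_(k < (D0 %/ m).+1) g (k%:Z * m%:Z).
pose G := q \Po 'X^m.
have coefG : forall n : nat, G`_n = g n%:Z.
  move=> n; rewrite /G coef_comp_poly_Xn // coef_poly.
  case: ifP => hmn.
    have e : ((n %/ m)%:Z * m%:Z) = n%:Z by rewrite -PoszM divnK.
    case: ifP => hlt; first by rewrite e.
    case: (eqVneq (g n%:Z) 0) => [-> //|gn]; exfalso.
    have hle : (n <= D0)%N by have := sg _ gn; lia.
    by rewrite ltnS (leq_div2r m hle) in hlt.
  case: (eqVneq (g n%:Z) 0) => [-> //|gn]; exfalso.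
  by have := c0g _ gn; rewrite dvdzE /= hmn.
have gG : shiftp 0 G = g.
  apply: vext => i; rewrite /shiftp addr0; case: ifP => h.
    by rewrite coefG gez0_abs.
  case: (eqVneq (g i) 0) => [-> //|gi]; have := sg _ gi; lia.
have Gnz : G != 0 by apply/eqP => e; apply: gnz; rewrite -gG e shiftp0.
have qnz : q != 0 by apply/eqP => e; move: Gnz; rewrite /G e comp_poly0 eqxx.
have sizeG : (size G <= D0.+1)%N.
  apply/leq_sizeP => j hj; rewrite coefG; case: (eqVneq (g j%:Z) 0) => // gj.
  have := sg _ gj; lia.
have Shg : forall k, S (sh k g) := shS hS Sg (class0_sc c0g).
have hsup : forall r n j, S (sh j (shiftp n (r * G))).
  elim/poly_ind => [|p c IH] n j.
    by rewrite mul0r shiftp0 sh_vzero.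
  have -> : (p * 'X + c%:P) * G = 'X * (p * G) + c%:P * G by ring.
  rewrite shiftp_add shiftp_X shiftp_scale sh_vadd sh_vscale sh_sh (shiftp_sh n G) gG sh_sh.
  by apply: Sadd; [exact: IH | apply: Ssc; exact: Shg].
have hsub : forall v, S v -> laurent_mult_of G v.
  move=> v Sv; have [N hs] := laurent_supp (Slau v Sv).
  pose V := \poly_(i < (N + N).+1) v (i%:Z - N%:Z).
  have vV : v = shiftp N V.
    apply: vext => i; rewrite /shiftp coef_poly.
    case: ifP => h1; [case: ifP => h2|].
    - congr v; rewrite gez0_abs //; ring.
    - case: (eqVneq (v i) 0) => // vi; have := hs _ vi => ?; exfalso; lia.
    - case: (eqVneq (v i) 0) => // vi; have := hs _ vi => ?; exfalso; lia.
  have hV := divp_eq V G; set Q := V %/ G in hV *; set R := V %% G in hV *.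
  have hR : R = 0.
    apply: NNPP => /eqP Rnz.
    have SR : S (shiftp N R).
      have -> : shiftp N R = vadd v (vscale (-1) (shiftp N (Q * G))).
        rewrite vV hV shiftp_add; apply: vext => i; rewrite /vadd /vscale; ring.
      by apply: Sadd => //; apply: Ssc; rewrite -(sh0 (shiftp N (Q * G))); exact: hsup.
    have Rsz : (size R <= D0)%N.
      have h := ltn_modp V G; rewrite Gnz in h; rewrite -ltnS; exact: leq_trans h sizeG.
    case: (posnP D0) => hD0.
      by move: Rsz; rewrite hD0 leqn0 size_poly_eq0 (negbTE Rnz).
    have wRnz : shiftp N R <> vzero.
      move=> e; move/eqP: Rnz; apply; apply/polyP => l; rewrite coef0.
      have := congr1 (fun w => w (l%:Z - N%:Z)) e; rewrite /shiftp /vzero subrK /=.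
      by [].
    have wRs : supp_in (shiftp N R) (- N%:Z) (D0.-1).
      move=> i; rewrite /shiftp; case: ifP => h; last by rewrite eqxx.
      move=> hi.
      case: (ltnP (absz (i + N%:Z)%R) (size R)) => hl; last by rewrite nth_default ?eqxx in hi.
      lia.
    have [w [Sw [wnz [scw hw]]]] := reduce3 hf hp hm cS SR wRnz wRs.
    have [b wb] := nonzero_ex wnz.
    pose r0 := ((b + N%:Z) %% m%:Z)%Z.
    have mnz : m%:Z != 0 by lia.
    have hr0 : 0 <= r0 by apply: modz_ge0.
    have hr1 : r0 < m%:Z by apply: ltz_pmod; lia.
    have hdiv : (m%:Z %| (b + N%:Z) - r0)%Z.
      apply/dvdzP'; exists ((b + N%:Z) %/ m%:Z)%Z; rewrite {1}(divz_eq (b + N%:Z) m%:Z) /r0; ring.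
    pose k := N%:Z - r0.
    have c0w2 : class0 m (sh k w).
      move=> i hi; have := scw _ _ hi wb => h.
      have -> : i = (i - k - b) + ((b + N%:Z) - r0) by rewrite /k; ring.
      exact: dvdz_add' h hdiv.
    have sw2 : supp_in (sh k w) 0 (D0.-1).
      move=> i hi; have := hw _ hi; rewrite /k => h.
      have := dvd_small hm (c0w2 _ hi); lia.
    have hlt : (D0.-1 < D0)%N by rewrite ltn_predL.
    have := hmin' _ _ (shS hS Sw scw k) c0w2 hlt sw2.
    move=> e; have := congr1 (fun w => w (b + k)) e; rewrite /sh /vzero addrK => /eqP.
    by rewrite (negbTE wb).
  by exists N, Q; rewrite vV hV hR addr0.
exists q; split => //; split.
  exists (lam 0); rewrite -/G gG; apply: vext => i; rewrite /Hop /vscale.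
  case: (eqVneq (g i) 0) => [->|gi]; first by rewrite !mulr0.
  by rewrite (@lam_same lam m hp i 0) // subr0; exact: c0g.
move=> v; split; first exact: hsub.
by move=> [n [r ->]]; rewrite -(sh0 (shiftp n (r * G))); exact: hsup.
Qed.

Lemma laurent_rep v : laurent v -> exists (N : nat) (V : {poly algC}), v = shiftp N V.
Proof.
move=> lv; have [N hs] := laurent_supp lv.
exists N, (\poly_(i < (N + N).+1) v (i%:Z - N%:Z)).
apply: vext => i; rewrite /shiftp coef_poly.
case: ifP => h1; [case: ifP => h2|].
- congr v; rewrite gez0_abs //; ring.
- case: (eqVneq (v i) 0) => // vi; have := hs _ vi => ?; exfalso; lia.
- case: (eqVneq (v i) 0) => // vi; have := hs _ vi => ?; exfalso; lia.
Qed.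

Lemma shiftp_class m n (G : {poly algC}) i :
  (forall j, G`_j != 0 -> (m %| j)%N) -> shiftp n G i != 0 -> (m%:Z %| i + n%:Z)%Z.
Proof.
move=> hG; rewrite /shiftp; case: ifP => h; last by rewrite eqxx.
by move=> /hG; rewrite dvdzE.
Qed.

Lemma Hop0 lam w : Hop lam w = Hop (fun i => lam (i + 0)) w.
Proof. by apply: vext => i; rewrite /Hop addr0. Qed.

Lemma LM_Hop lam m (G : {poly algC}) : is_abs_period lam m ->
  (forall j, G`_j != 0 -> (m %| j)%N) ->
  forall r s n, exists r', Hop (fun i => lam (i + s)) (shiftp n (r * G)) = shiftp n (r' * G).
Proof.
move=> hp hG; elim/poly_ind => [|p c IH] s n.
  exists 0; rewrite mul0r shiftp0; apply: vext => i; by rewrite /Hop /vzero mulr0.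
have [p' hp'] := IH (s + 1) n.
exists ('X * p' + (c * lam (s - n%:Z))%:P).
have -> : (p * 'X + c%:P) * G = 'X * (p * G) + c%:P * G by ring.
have -> : ('X * p' + (c * lam (s - n%:Z))%:P) * G = 'X * (p' * G) + (c * lam (s - n%:Z))%:P * G by ring.
rewrite !shiftp_add !shiftp_X !shiftp_scale -hp'.
apply: vext => i; rewrite /Hop /vadd /vscale /sh.
rewrite (_ : i - 1 + (s + 1) = i + s); last by ring.
rewrite mulrDr; congr (_ + _).
case: (eqVneq (shiftp n G i) 0) => [->|gi]; first by rewrite !mulr0.
rewrite (@lam_same lam m hp (i + s) (s - n%:Z)); first ring.
by apply: dvdz_eq' (shiftp_class hG gi); ring.
Qed.

Lemma LM_sub lam z m (G : {poly algC}) : is_abs_period lam m ->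
  (forall j, G`_j != 0 -> (m %| j)%N) ->
  is_submodule A_x (A_y lam z) (Hop lam) (laurent_mult_of G).
Proof.
move=> hp hG; split; first by move=> v [n [r ->]]; exact: laurent_shiftp.
split; first by exists 0%N, 0; rewrite mul0r shiftp0.
split.
  move=> v w [n1 [r1 ->]] [n2 [r2 ->]]; exists (n1 + n2)%N, ('X^n2 * r1 + 'X^n1 * r2).
  rewrite mulrDl shiftp_add -!mulrA (shiftp_Xn n1 n2 (r1 * G)) addnC shiftp_Xn //.
split.
  by move=> c v [n [r ->]]; exists n, (c%:P * r); rewrite -mulrA shiftp_scale.
split.
  move=> v [n [r ->]]; exists n, ('X * r).
  by rewrite -mulrA shiftp_X.
split.
  move=> v [n [r ->]].
  have [r' hr'] := LM_Hop hp hG r 0 n.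
  exists n.+1, (r' + z%:P * r).
  rewrite mulrDl -mulrA shiftp_add shiftp_scale -!shiftp_succ -hr' -Hop0.
  apply: vext => i; rewrite /A_y /sh /vadd /vscale /Hop opprK; ring.
move=> v [n [r ->]].
have [r' hr'] := LM_Hop hp hG r 0 n.
by exists n, r'; rewrite Hop0 hr'.
Qed.

Lemma factorX (q : {poly algC}) : q != 0 -> exists k (q' : {poly algC}), q = q' * 'X^k /\ q'.[0] != 0.
Proof.
have : forall n (q : {poly algC}), (size q <= n)%N -> q != 0 -> exists k (q' : {poly algC}), q = q' * 'X^k /\ q'.[0] != 0.
  elim=> [|n IH] p hs pnz.
    by move: hs; rewrite leqn0 size_poly_eq0 (negbTE pnz).
  case: (eqVneq p.[0] 0) => h0; last by exists 0%N, p; rewrite expr0 mulr1.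
  have [p1 e] : exists p1, p = p1 * ('X - 0%:P) by apply/factor_theorem; exact/eqP.
  rewrite subr0 in e.
  have p1nz : p1 != 0 by apply: contraNneq pnz => e1; rewrite e e1 mul0r.
  have hs1 : (size p1 <= n)%N by move: hs; rewrite e size_mulX.
  have [k [q' [e' hq']]] := IH p1 hs1 p1nz.
  by exists k.+1, q'; split => //; rewrite e e' exprSr mulrA.
by move=> h qnz; apply: (h (size q)).
Qed.

Lemma max_A f lam z m : in_Sf f lam -> (forall i, lam i + z != 0) -> is_abs_period lam m -> (0 < m)%N ->
  forall S, is_max_sub A_x (A_y lam z) (Hop lam) S ->
  exists a : algC, a != 0 /\ (forall v, S v <-> laurent_mult_of ('X^m - a%:P) v).
Proof.
move=> hf hz hp hm S [hS [hnz [hpr hmax]]].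
have [q [qnz [_ hq]]] := part3_gen hf hp hm (closed_of_sub hS) (shOK_A hp hz hS) hnz.
have [k [q' [eq hq0]]] := factorX qnz.
case: (leqP (size q') 1) => hs.
  exfalso; have [v [lv nSv]] := hpr; apply: nSv; apply/hq.
  set c := q'`_0.
  have cq : q' = c%:P by apply: size1_polyC.
  have cnz : c != 0 by rewrite /c -horner_coef0.
  have [N [V ->]] := laurent_rep lv.
  exists (N + m * k)%N, ((c^-1)%:P * V).
  rewrite eq cq comp_polyM comp_polyC comp_Xn_poly -exprM.
  rewrite -(shiftp_Xn N (m * k) V); congr shiftp.
  have e : c^-1%:P * V * (c%:P * 'X^(m * k)) = (c^-1 * c)%:P * ('X^(m * k) * V) by rewrite polyCM; ring.
  by rewrite e mulVf // mul1r.
have [a ra] : exists a, root q' a by apply/closed_rootP; rewrite neq_ltn hs orbT.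
have anz : a != 0 by apply/eqP => e; move: ra; rewrite e /root (negbTE hq0).
have [q'' eq'] : exists q'', q' = q'' * ('X - a%:P) by apply/factor_theorem.
pose S' := laurent_mult_of ('X^m - a%:P).
have hG' : forall i, ('X^m - a%:P)`_i != 0 -> (m %| i)%N.
  move=> i; rewrite coefB coefXn coefC.
  case: (eqVneq i m) => [->|im]; first by rewrite dvdnn.
  case: (eqVneq i 0%N) => [->|i0]; first by rewrite dvdn0.
  by rewrite subrr eqxx.
have sub' := LM_sub z hp hG'.
have incl : forall v, S v -> S' v.
  move=> v /hq [n [r ->]]; exists n, (r * (q'' \Po 'X^m) * ('X^m)^+k).
  congr shiftp.
  rewrite eq eq' !comp_polyM comp_polyB comp_polyX comp_polyC comp_Xn_poly; ring.
have prop' : Defs.proper_sub S'.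
  exists (delta 0); split; first exact: laurent_delta.
  move=> [n [r e]].
  have pe : 'X^n = r * ('X^m - a%:P).
    apply/polyP => l; have := congr1 (fun w => w (l%:Z - n%:Z)) e.
    rewrite /delta /shiftp subrK coefXn subr_eq0 eqz_nat /=.
    by case: (l == n).
  pose x := m.-root a.
  have hx : x ^+ m = a by rewrite /x rootCK.
  have := congr1 (fun p => p.[x]) pe; rewrite hornerXn hornerM !hornerE hx subrr mulr0.
  move=> /eqP; rewrite expf_eq0 => /andP[_ /eqP x0].
  by move: hx; rewrite x0 expr0n; case: (m) hm => // m' _ /esym/eqP; rewrite (negbTE anz).
have hS' := hmax S' sub' incl prop'.
exists a; split => // v; split; [exact: incl | by move/hS'].
Qed.

Unset Implicit Arguments.
Theorem lemma7 (f : {poly algC}) (lam : int -> algC) (z : algC) :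
  in_Sf f lam ->
  (* (1) *)
  (is_Hf_module f A_x (A_y lam z) (Hop lam) /\
   is_Hf_module f (B_x lam z) B_y (Hop lam)) /\
  (* (2) *)
  (is_simple A_x (A_y lam z) (Hop lam) <->
     (forall i, lam i + z != 0) /\ is_abs_period lam 0) /\
  (is_simple (B_x lam z) B_y (Hop lam) <->
     (forall i, lam i + z != 0) /\ is_abs_period lam 0) /\
  (* (3) *)
  (forall m : nat, (forall i, lam i + z != 0) -> is_abs_period lam m -> (0 < m)%N ->
    (forall S, is_submodule A_x (A_y lam z) (Hop lam) S -> nonzero_sub S ->
       exists q : {poly algC}, q != 0 /\
         (exists c : algC, Hop lam (shiftp 0 (q \Po 'X^m)) = vscale c (shiftp 0 (q \Po 'X^m))) /\
         (forall v, S v <-> laurent_mult_of (q \Po 'X^m) v)) /\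
    (forall S, is_submodule (B_x lam z) B_y (Hop lam) S -> nonzero_sub S ->
       exists q : {poly algC}, q != 0 /\
         (exists c : algC, Hop lam (shiftp 0 (q \Po 'X^m)) = vscale c (shiftp 0 (q \Po 'X^m))) /\
         (forall v, S v <-> laurent_mult_of (q \Po 'X^m) v)) /\
    (forall S, is_max_sub A_x (A_y lam z) (Hop lam) S ->
       exists a : algC, a != 0 /\
         (forall v, S v <-> laurent_mult_of ('X^m - a%:P) v))).
Proof.
move=> hf; split; first by split; [exact: partA | exact: partB].
split; first exact: simpleA.
split; first exact: simpleB.
move=> m hz hp hm; split.
  by move=> S hS hnz; exact: (part3_gen hf hp hm (closed_of_sub hS) (shOK_A hp hz hS) hnz).
split.
  by move=> S hS hnz; exact: (part3_gen hf hp hm (closed_of_sub hS) (shOK_B hp hz hS) hnz).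
exact: (max_A hf hz hp hm).
Qed.
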